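(* For the graph orientation problem on bipartite graphs with arbitrary query costs, \textsc{BestVC} is $\frac43$-competitive, i.e., $\mathbb E[\textsc{BestVC}]\le\frac43\mathbb E[\mathrm{OPT}]$ for every such instance.
   Context: An instance of the graph orientation problem consists of a graph $G=(V,E)$ and, for each vertex $v$, a query cost $c_v\ge0$ and a continuous distribution $d_v$ with minimal support interval $I_v=(\ell_v,r_v)$; it is assumed that for each edge the two intervals intersect and neither contains the other. Weights $w_v\sim d_v$ are independent and querying $v$ reveals $w_v$ at cost $c_v$. For a realization, $Q$ is a feasible query set if knowing $w_u$ for $u\in Q$ and only the intervals for unqueried vertices suffices to identify, for every edge, its endpoint of minimum weight; $\mathbb E[\mathrm{OPT}]$ is the expected minimum cost of a feasible query set. A vertex is mandatory if it belongs to every feasible query set; $p_v$ is the probability that $v$ is mandatory. A vertex cover-based algorithm first queries a vertex cover $VC$ of $G$ and then queries all vertices of $V\setminus VC$ that are mandatory; its expected cost is $\sum_{v\in V}p_vc_v+\sum_{v\in VC}(1-p_v)c_v$. \textsc{BestVC} is the vertex cover-based algorithm whose vertex cover $VC$ minimizes $\sum_{v\in VC}(1-p_v)c_v$ among all vertex covers of $G$. *)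

(* Defs.v *)
From HB Require Import structures.
From mathcomp Require Import all_boot all_order all_algebra.
From mathcomp Require Import all_classical all_reals all_analysis.
Set Implicit Arguments. Unset Strict Implicit. Unset Printing Implicit Defensive.
Import Order.TTheory GRing.Theory Num.Theory.
Local Open Scope classical_set_scope.
Local Open Scope ring_scope.

Section GraphOrientation.
Variables (R : realType) (V : finType).

Definition simple_graph (e : rel V) : Prop :=
  (forall u v, e u v = e v u) /\ (forall v, ~~ e v v).

Definition bipartite (e : rel V) : Prop :=
  exists A : {set V}, forall u v, e u v -> (u \in A) != (v \in A).

Definition vertex_cover (e : rel V) (C : {set V}) : Prop :=
  forall u v, e u v -> (u \in C) || (v \in C).

Definition overlapping (l r : V -> R) (u v : V) : Prop :=
  `]l u, r u[ `&` `]l v, r v[ !=set0 /\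
  ~ (`]l u, r u[ `<=` `]l v, r v[) /\ ~ (`]l v, r v[ `<=` `]l u, r u[).

(* w' is consistent with the information obtained by querying Q under
   realization w: queried weights are known, unqueried ones are only known
   to lie in their interval. *)
Definition consistent (l r : V -> R) (Q : {set V}) (w w' : V -> R) : Prop :=
  (forall u, u \in Q -> w' u = w u) /\
  (forall v, v \notin Q -> l v < w' v < r v).

(* Q is feasible for realization w: for every edge, the information
   determines an endpoint of minimum weight. *)
Definition feasible (e : rel V) (l r : V -> R) (Q : {set V}) (w : V -> R)
  : Prop :=
  forall u v, e u v ->
    (forall w', consistent l r Q w w' -> w' u <= w' v) \/
    (forall w', consistent l r Q w w' -> w' v <= w' u).

Definition qcost (c : V -> R) (Q : {set V}) : R := \sum_(v in Q) c v.

(* minimum cost of a feasible query set (V itself is always feasible) *)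
Definition opt_cost (e : rel V) (c l r : V -> R) (w : V -> R) : R :=
  \big[Num.min/qcost c [set: V]]_(Q : {set V} | `[< feasible e l r Q w >])
     qcost c Q.

Definition mandatory (e : rel V) (l r : V -> R) (v : V) (w : V -> R) : Prop :=
  forall Q, feasible e l r Q w -> v \in Q.

Definition vc_alg_cost (e : rel V) (c l r : V -> R) (VC : {set V})
  (w : V -> R) : R :=
  \sum_(v in VC) c v +
  \sum_(v | (v \notin VC) && `[< mandatory e l r v w >]) c v.

End GraphOrientation.

Definition realize {T R : Type} {V : finType} (w : V -> T -> R) (t : T)
  : V -> R := fun v => w v t.

Section Prob.
Variables (d : measure_display) (T : measurableType d) (R : realType)
  (P : probability T R) (V : finType).

Definition mutually_independent (w : V -> T -> R) : Prop :=
  forall B : V -> set R, (forall v, measurable (B v)) ->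
    fine (P (\bigcap_(v in [set: V]) (w v @^-1` B v))) =
    \prod_(v : V) fine (P (w v @^-1` B v)).

Definition continuous_distr (X : T -> R) : Prop :=
  forall x : R, P (X @^-1` [set x]) = 0%E.

Definition min_support_interval (X : T -> R) (l r : R) : Prop :=
  l < r /\ P (X @^-1` `]l, r[) = 1%E /\
  forall a b : R, P (X @^-1` `]a, b[) = 1%E -> `]l, r[ `<=` `]a, b[.

Definition p_mand (e : rel V) (l r : V -> R) (w : V -> T -> R) (v : V) : R :=
  fine (P [set t | mandatory e l r v (realize w t)]).

Definition best_vc (e : rel V) (c l r : V -> R) (w : V -> T -> R)
  (VC : {set V}) : Prop :=
  vertex_cover e VC /\
  forall VC', vertex_cover e VC' ->
    \sum_(v in VC) (1 - p_mand e l r w v) * c v <=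
    \sum_(v in VC') (1 - p_mand e l r w v) * c v.

End Prob.

(* Main.v *)
Require Import Defs.
From HB Require Import structures.
From mathcomp Require Import all_boot all_order all_algebra.
From mathcomp Require Import all_classical all_reals all_analysis.
From mathcomp Require Import ring lra measurable_realfun.
Import Order.TTheory GRing.Theory Num.Theory.
Set Implicit Arguments. Unset Strict Implicit. Unset Printing Implicit Defensive.
Local Open Scope classical_set_scope.
Local Open Scope ring_scope.
Section Comb.
Variables (R : realType) (V : finType) (e : rel V) (l r : V -> R).
Hypothesis He : simple_graph e.
Hypothesis Hlr : forall v, l v < r v.
Hypothesis Hov : forall u v, e u v -> exists m, (l u < m < r u) /\ (l v < m < r v).

Definition inI (x : R) (v : V) := (l v < x) && (x < r v).
Definition pat (w : V -> R) : {set V * V} := [set p | inI (w p.1) p.2].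
Definition feasC (s : {set V * V}) (Q : {set V}) : bool :=
  [forall u, forall v, e u v ==> (((u \in Q) && ((v \in Q) || ((u,v) \notin s)))
     || ((v \in Q) && ((v,u) \notin s)))].
Definition mandC (s : {set V * V}) v := [exists z, e z v && ((z,v) \in s)].

Definition resolved (Q : {set V}) (w : V -> R) u v :=
  (forall w', consistent l r Q w w' -> w' u <= w' v) \/
  (forall w', consistent l r Q w w' -> w' v <= w' u).

Definition mid z := (l z + r z) / 2.
Definition wmod (Q : {set V}) (w : V -> R) u a v b := fun z =>
  if z == u then a else if z == v then b else if z \in Q then w z else mid z.

Lemma mid_in z : l z < mid z < r z.
Proof. have := Hlr z; rewrite /mid => h; apply/andP; split; lra. Qed.

Lemma wmod_u (Q : {set V}) (w : V -> R) u a v b : wmod Q w u a v b u = a.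
Proof. by rewrite /wmod eqxx. Qed.
Lemma wmod_v (Q : {set V}) (w : V -> R) u a v b : u != v -> wmod Q w u a v b v = b.
Proof. by move=> h; rewrite /wmod eq_sym (negbTE h) eqxx. Qed.

Lemma wmod_cons (Q : {set V}) (w : V -> R) u a v b : u != v ->
  (u \in Q -> a = w u) -> (u \notin Q -> l u < a < r u) ->
  (v \in Q -> b = w v) -> (v \notin Q -> l v < b < r v) ->
  consistent l r Q w (wmod Q w u a v b).
Proof.
move=> uv h1 h2 h3 h4; split=> z zQ; rewrite /wmod.
- case: (eqVneq z u) => [zu|zu]; first by rewrite zu in zQ *; rewrite h1.
  by case: (eqVneq z v) => [zv|zv]; [rewrite zv in zQ *; rewrite h3 | rewrite zQ].
- case: (eqVneq z u) => [zu|zu]; first by rewrite zu in zQ *; rewrite h2.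
  case: (eqVneq z v) => [zv|zv]; first by rewrite zv in zQ *; rewrite h4.
  by rewrite (negbTE zQ) mid_in.
Qed.

Lemma res_both (Q : {set V}) (w : V -> R) u v : u \in Q -> v \in Q -> resolved Q w u v.
Proof.
move=> uQ vQ; case: (leP (w u) (w v)) => h.
  by left=> w' [Hq _]; rewrite !Hq.
by right=> w' [Hq _]; rewrite !Hq // ltW.
Qed.

Lemma res_one (Q : {set V}) (w : V -> R) u v : u \in Q -> v \notin Q -> ~~ inI (w u) v -> resolved Q w u v.
Proof.
move=> uQ vQ; rewrite /inI negb_and -!leNgt => /orP[h|h].
  left=> w' [Hq Hn]; rewrite (Hq u uQ); have /andP[h1 _] := Hn v vQ.
  lra.
right=> w' [Hq Hn]; rewrite (Hq u uQ); have /andP[_ h1] := Hn v vQ.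
lra.
Qed.

Lemma neq_edge u v : e u v -> u != v.
Proof. by move=> euv; apply/eqP=> uv; move: euv; rewrite uv (negbTE (He.2 v)). Qed.

Lemma nres_none (Q : {set V}) (w : V -> R) u v : e u v -> u \notin Q -> v \notin Q -> ~ resolved Q w u v.
Proof.
move=> euv uQ vQ; have uv := neq_edge euv.
have [m [/andP[m1 m2] /andP[m3 m4]]] := Hov euv.
case=> H.
  have := H (wmod Q w u ((m + r u)/2) v ((l v + m)/2)).
  rewrite wmod_u wmod_v //.
  have hc : consistent l r Q w (wmod Q w u ((m + r u)/2) v ((l v + m)/2)).
    apply: wmod_cons => //; rewrite ?(negbTE uQ) ?(negbTE vQ) //.
      by move=> _; apply/andP; split; lra.
    by move=> _; apply/andP; split; lra.
  move=> /(_ hc); lra.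
have := H (wmod Q w u ((l u + m)/2) v ((m + r v)/2)).
rewrite wmod_u wmod_v //.
have hc : consistent l r Q w (wmod Q w u ((l u + m)/2) v ((m + r v)/2)).
  apply: wmod_cons => //; rewrite ?(negbTE uQ) ?(negbTE vQ) //.
    by move=> _; apply/andP; split; lra.
  by move=> _; apply/andP; split; lra.
move=> /(_ hc); lra.
Qed.

Lemma nres_one (Q : {set V}) (w : V -> R) u v : u != v -> u \in Q -> v \notin Q -> inI (w u) v -> ~ resolved Q w u v.
Proof.
move=> uv uQ vQ /andP[h1 h2]; case=> H.
  have := H (wmod Q w u (w u) v ((l v + w u)/2)).
  rewrite wmod_u wmod_v //.
  have hc : consistent l r Q w (wmod Q w u (w u) v ((l v + w u)/2)).
    apply: wmod_cons => //; rewrite ?uQ ?(negbTE vQ) //.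
    by move=> _; apply/andP; split; lra.
  move=> /(_ hc); lra.
have := H (wmod Q w u (w u) v ((w u + r v)/2)).
rewrite wmod_u wmod_v //.
have hc : consistent l r Q w (wmod Q w u (w u) v ((w u + r v)/2)).
  apply: wmod_cons => //; rewrite ?uQ ?(negbTE vQ) //.
  by move=> _; apply/andP; split; lra.
move=> /(_ hc); lra.
Qed.

Lemma resolved_sym (Q : {set V}) (w : V -> R) u v : resolved Q w u v <-> resolved Q w v u.
Proof. by split; case=> h; [right|left|right|left]. Qed.

Lemma resolvedE Q w u v : e u v -> resolved Q w u v <->
  ((u \in Q) && ((v \in Q) || ((u,v) \notin pat w))) || ((v \in Q) && ((v,u) \notin pat w)).
Proof.
move=> euv; have uv := neq_edge euv; have vu : v != u by rewrite eq_sym.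
rewrite !inE /=.
case uQ: (u \in Q); case vQ: (v \in Q) => /=.
- by split=> // _; apply: res_both.
- case hi: (inI (w u) v) => /=.
    by split=> // /(nres_one uv uQ (negbT vQ) hi).
  by split=> // _; apply: res_one => //; rewrite ?vQ ?hi.
- rewrite resolved_sym; case hi: (inI (w v) u) => /=.
    by split=> // /(nres_one vu vQ (negbT uQ) hi).
  by split=> // _; apply: res_one => //; rewrite ?uQ ?hi.
- by split=> // /(nres_none euv (negbT uQ) (negbT vQ)).
Qed.

Lemma feasibleE Q w : feasible e l r Q w <-> feasC (pat w) Q.
Proof.
split=> H.
  apply/forallP=> u; apply/forallP=> v; apply/implyP=> euv.
  by apply/(resolvedE Q w euv).1; exact: H.
move=> u v euv; apply/(resolvedE Q w euv).2.
by move/forallP: H => /(_ u)/forallP/(_ v)/implyP; apply.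
Qed.

Lemma mandatoryE v w : mandatory e l r v w <-> mandC (pat w) v.
Proof.
split=> Hm.
  apply: contraT => /existsPn nm.
  have : feasible e l r (~: [set v]) w.
    apply/feasibleE; apply/forallP=> a; apply/forallP=> b; apply/implyP=> eab.
    rewrite !in_setC1.
    case: (eqVneq b v) => [bv|bv].
      have av : a != v by rewrite -bv; exact: neq_edge eab.
      rewrite av /=; have := nm a; rewrite -bv eab /= => ->; by [].
    case: (eqVneq a v) => [av|av] /=; last by [].
    by have := nm b; rewrite -av He.1 eab /= => ->.
  by move/Hm; rewrite in_setC1 eqxx.
move=> Q /feasibleE /forallP; case/existsP: Hm => z /andP[ezv zv].
move=> /(_ z)/forallP/(_ v)/implyP/(_ ezv)/orP[/andP[_ /orP[//|]]|/andP[//]].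
by rewrite zv.
Qed.

End Comb.
Section Round.
Variables (R : realType) (V : finType) (e : rel V) (A : {set V}).
Hypothesis Hbip : forall u v, e u v -> (u \in A) != (v \in A).
Variables (x k : V -> R).
Hypotheses (hx : forall v, 0 <= x v <= 1) (hk : forall v, 0 <= k v)
  (hcov : forall u v, e u v -> 1 <= x u + x v).

Lemma in_itvset (t : R) (i : interval R) : (t \in [set` i]) = (t \in i).
Proof. by apply/idP/idP; [move/set_mem | move=> h; apply/mem_set]. Qed.

Lemma indic_ge0E (T : Type) (B : set T) (t : T) : (0 <= ((\1_B t : R))%:E)%E.
Proof. by rewrite lee_fin indicE ler0n. Qed.

Definition vcb (C : {set V}) := [forall u, forall v, e u v ==> (u \in C) || (v \in C)].

Lemma vcbP C : vcb C -> vertex_cover e C.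
Proof. by move=> /forallP H u v euv; move: (H u) => /forallP/(_ v)/implyP; apply. Qed.

Definition cost (C : {set V}) := \sum_(v in C) k v.
Definition Iv v : set R := if v \in A then [set` `[0, x v]%R] else [set` `[1 - x v, 1]%R].
Definition Dset : set R := [set` `[0, 1]%R].
Definition cth (t : R) : {set V} := [set v | if v \in A then t <= x v else 1 - x v <= t].

Lemma cth_vc t : vcb (cth t).
Proof.
apply/forallP=> u; apply/forallP=> v; apply/implyP=> euv; rewrite !inE.
have := hcov euv; have := Hbip euv.
case: (u \in A); case: (v \in A) => //= _ h.
- by case: (leP t (x u)) => //= h2; lra.
- by case: (leP t (x v)) => //= h2; rewrite ?orbT //= orbF; lra.
Qed.

Lemma indic_cth v t : Dset t -> \1_(Iv v) t = (v \in cth t)%:R :> R.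
Proof.
rewrite /Dset /Iv /= in_itv /= => /andP[t0 t1]; rewrite indicE inE.
have := hx v => /andP[x0 x1].
case: (v \in A); rewrite in_itvset in_itv /=.
  by rewrite t0.
by rewrite t1 andbT.
Qed.

Lemma lam_cc (a b : R) : a <= b -> lebesgue_measure [set` `[a, b]%R] = (b - a)%:E.
Proof.
move=> ab; rewrite lebesgue_measure_itv /= lte_fin.
case: ltP => h; first by rewrite EFinB.
have -> : a = b by apply/le_anti; rewrite ab h.
by rewrite subrr.
Qed.


Lemma round_vc : exists C, vertex_cover e C /\ \sum_(v in C) k v <= \sum_v x v * k v.
Proof.
have vT : vcb [set: V]%SET.
  rewrite /vcb; apply/forallP=> u; apply/forallP=> v; by rewrite !inE implybT.
case: (arg_minP cost vT) => C0 vC0 minC0.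
exists C0; split; first exact: vcbP.
have mD : measurable Dset := measurable_itv _.
have mI : forall v, measurable (Iv v).
  by move=> v; rewrite /Iv; case: ifP => _; exact: measurable_itv.
have lamD : lebesgue_measure Dset = 1%E by rewrite /Dset lam_cc // subr0.
have IvD : forall v, Iv v `&` Dset = Iv v.
  move=> v; apply/setIidl => t; have /andP[x0 x1] := hx v.
  rewrite /Iv /Dset; case: ifP => _ /=; rewrite !in_itv /= => /andP[h1 h2];
    apply/andP; split; lra.
have lamI : forall v, lebesgue_measure (Iv v) = (x v)%:E.
  move=> v; have /andP[x0 x1] := hx v; rewrite /Iv; case: ifP => _.
    by rewrite lam_cc // subr0.
  rewrite lam_cc; last lra.
  by congr (_%:E); lra.
have H2 : (\int[lebesgue_measure]_(t in Dset) (\sum_v (k v * \1_(Iv v) t)%:E))%E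
          = (\sum_v (k v * x v)%:E)%E.
  rewrite ge0_integral_sum //; last first.
    by move=> v t _; rewrite lee_fin mulr_ge0 // indicE ler0n.
    move=> v; apply/measurable_EFinP; apply: measurable_funM => //.
    exact: measurable_indic (mI v).
  apply: eq_bigr => v _; rewrite (_ : (fun t => (k v * \1_(Iv v) t)%:E) =
     (fun t => (k v)%:E * (\1_(Iv v) t)%:E))%E; last first.
    by apply/funext => t; rewrite EFinM.
  rewrite ge0_integralZl_EFin //.
  - rewrite integral_indic //.
    transitivity ((k v)%:E * (x v)%:E)%E; last by [].
    congr (_ * _)%E; rewrite -(lamI v); congr (lebesgue_measure _); exact: IvD v.
  all: try (by move=> t _; exact: indic_ge0E).
  all: try (by apply/measurable_EFinP; exact: measurable_indic (mI v)).
  all: try exact: (mI v).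
have H1 : (\int[lebesgue_measure]_(t in Dset) (cost C0 * \1_Dset t)%:E)%E
          = (cost C0)%:E.
  rewrite (_ : (fun t => (cost C0 * \1_Dset t)%:E) =
     (fun t => (cost C0)%:E * (\1_Dset t)%:E))%E; last first.
    by apply/funext => t; rewrite EFinM.
  have c0 : 0 <= cost C0 by apply: sumr_ge0.
  rewrite ge0_integralZl_EFin //.
  - rewrite integral_indic //.
    transitivity ((cost C0)%:E * 1)%E; last exact: mule1.
    congr (_ * _)%E; rewrite -lamD; congr (lebesgue_measure _); exact: setIid.
  all: try (by move=> t _; exact: indic_ge0E).
  all: try (by apply/measurable_EFinP; exact: measurable_indic mD).
have H3 : ((cost C0)%:E <=
    \int[lebesgue_measure]_(t in Dset) (\sum_v (k v * \1_(Iv v) t)%:E))%E.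
  rewrite -H1.
  apply: ge0_le_integral => //.
  - by move=> t _; rewrite lee_fin mulr_ge0 ?sumr_ge0 // indicE ler0n.
  - by apply/measurable_EFinP; apply: measurable_funM => //; exact: measurable_indic mD.
  - apply: emeasurable_sum => v; apply/measurable_EFinP; apply: measurable_funM => //.
    exact: measurable_indic (mI v).
  move=> t Dt; rewrite sumEFin lee_fin.
  rewrite indicE mem_set // mulr1.
  have -> : \sum_v k v * \1_(Iv v) t = cost (cth t).
    rewrite /cost [RHS]big_mkcond /=; apply: eq_bigr => v _.
    by rewrite indic_cth //; case: (v \in cth t); rewrite ?mulr1 ?mulr0.
  exact: minC0 (cth_vc t).
move: H3; rewrite H2 sumEFin lee_fin => H3.
apply: (le_trans H3); apply: ler_sum => v _; by rewrite mulrC.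
Qed.

End Round.
Section Alg.
Variable R : realType.

Lemma key_ineq (a b Yu Yv X Z : R) : 0 < a -> a <= 1 -> 0 < b -> b <= 1 ->
  0 <= Yu -> 0 <= Yv -> a * b <= Yu + Yv ->
  X * (3 * a) = 1 - a + 4 * Yu -> Z * (3 * b) = 1 - b + 4 * Yv -> 1 <= X + Z.
Proof.
move=> a0 a1 b0 b1 yu yv hab hX hZ.
have ab0 : 0 < a * b by apply: mulr_gt0.
have key : 3 * (a * b) <= b * (1 - a + 4 * Yu) + a * (1 - b + 4 * Yv).
  case: (leP a b) => h.
    have h1 : a * Yu <= b * Yu by apply: ler_wpM2r.
    have h2 : a * (a * b) <= a * (Yu + Yv) by apply: ler_wpM2l; lra.
    have h3 : 0 <= b * ((2 * a - 1) * (2 * a - 1)) by apply: mulr_ge0; [lra| rewrite -expr2 sqr_ge0].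
    have h4 : 0 <= a * (1 - b) by apply: mulr_ge0; lra.
    nra.
  have h1 : b * Yv <= a * Yv by apply: ler_wpM2r; lra.
  have h2 : b * (a * b) <= b * (Yu + Yv) by apply: ler_wpM2l; lra.
  have h3 : 0 <= a * ((2 * b - 1) * (2 * b - 1)) by apply: mulr_ge0; [lra| rewrite -expr2 sqr_ge0].
  have h4 : 0 <= b * (1 - a) by apply: mulr_ge0; lra.
  nra.
have : 3 * (a * b) <= 3 * (a * b) * (X + Z).
  have -> : 3 * (a * b) * (X + Z) = b * (X * (3 * a)) + a * (Z * (3 * b)) by ring.
  by rewrite hX hZ.
move=> h; have h3 : 0 < 3 * (a * b) by lra.
rewrite -(ler_pM2l h3) mulr1; exact: h.
Qed.

End Alg.
Section Final.
Variables (R : realType) (V : finType) (e : rel V) (A : {set V}).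
Hypothesis Hbip : forall u v, e u v -> (u \in A) != (v \in A).
Variables (p q c : V -> R).
Hypotheses (hp0 : forall v, 0 <= p v) (hpq : forall v, p v <= q v)
  (hq1 : forall v, q v <= 1) (hc : forall v, 0 <= c v)
  (hedge : forall u v, e u v -> (1 - p u) * (1 - p v) <= (q u - p u) + (q v - p v)).
Variable VC : {set V}.
Hypothesis hVC : vertex_cover e VC.
Hypothesis hmin : forall C, vertex_cover e C ->
  \sum_(v in VC) (1 - p v) * c v <= \sum_(v in C) (1 - p v) * c v.

Definition Fv v := (4 * q v - 3 * p v) / (3 * (1 - p v)).
Definition xv v := if p v < 1 then (if Fv v <= 1 then Fv v else 1) else 1.

Lemma Fv_eq v : p v < 1 -> Fv v * (3 * (1 - p v)) = 4 * q v - 3 * p v.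
Proof. move=> h; rewrite /Fv divfK //; apply/eqP => h2; lra. Qed.

Lemma Fv_ge0 v : p v < 1 -> 0 <= Fv v.
Proof.
move=> h; rewrite /Fv divr_ge0 //; have := hpq v; have := hp0 v; lra.
Qed.

Lemma xv_ge0 v : 0 <= xv v.
Proof. rewrite /xv; case: ifP => h //; case: ifP => // _; exact: Fv_ge0. Qed.

Lemma xv_le1 v : xv v <= 1.
Proof. by rewrite /xv; case: ifP => h //; case: ifP. Qed.

Lemma xv_cost v : p v + xv v * (1 - p v) <= 4 / 3 * q v.
Proof.
have := hpq v; have := hq1 v; have := hp0 v => h0 h1 h2.
rewrite /xv; case: ifP => hp; last first.
  have : 1 <= p v by rewrite leNgt hp.
  move=> h3; lra.
have hF := Fv_eq hp.
case: ifP => hF1.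
  have e1 : Fv v * (1 - p v) = (4 * q v - 3 * p v) / 3.
    by rewrite -hF; field.
  rewrite e1; lra.
have h4 : 1 < Fv v by rewrite ltNge hF1.
have h5 : 3 * (1 - p v) < Fv v * (3 * (1 - p v)).
  by rewrite -{1}[3 * (1 - p v)]mul1r ltr_pM2r //; lra.
lra.
Qed.

Lemma xv_cov u v : e u v -> 1 <= xv u + xv v.
Proof.
move=> euv; have := xv_ge0 u; have := xv_ge0 v.
rewrite /xv; case: (ifP (p u < 1)) => hu; last lra.
case: (ifP (Fv u <= 1)) => hu1; last lra.
case: (ifP (p v < 1)) => hv; last lra.
case: (ifP (Fv v <= 1)) => hv1; last lra.
move=> g1 g2.
have := hpq u; have := hpq v; have := hp0 u; have := hp0 v => a1 a2 a3 a4.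
apply: (@key_ineq R (1 - p u) (1 - p v) (q u - p u) (q v - p v)); try lra.
- exact: hedge.
- by rewrite Fv_eq //; ring.
- by rewrite Fv_eq //; ring.
Qed.

Lemma final_alg : \sum_(v in VC) c v + \sum_(v | v \notin VC) p v * c v <=
  4 / 3 * \sum_v q v * c v.
Proof.
have [C [vC hC]] := @round_vc R V e A Hbip xv (fun v => (1 - p v) * c v)
  (fun v => ltac:(rewrite xv_ge0 xv_le1 //))
  (fun v => ltac:(apply: mulr_ge0 => //; have := hpq v; have := hq1 v; lra))
  xv_cov.
have e1 : \sum_(v in VC) c v + \sum_(v | v \notin VC) p v * c v =
   \sum_v p v * c v + \sum_(v in VC) (1 - p v) * c v.
  rewrite [\sum_v p v * c v](bigID (fun v => v \in VC)) /=.
  rewrite (eq_bigr (fun v => p v * c v + (1 - p v) * c v)); last first.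
    by move=> v _; ring.
  rewrite big_split /=; ring.
rewrite e1.
have h2 := le_trans (hmin vC) hC.
have h3 : \sum_v p v * c v + \sum_v xv v * ((1 - p v) * c v) <= 4 / 3 * \sum_v q v * c v.
  rewrite -big_split /= mulr_sumr; apply: ler_sum => v _.
  have := xv_cost v; have := hc v => h4 h5.
  have -> : p v * c v + xv v * ((1 - p v) * c v) = (p v + xv v * (1 - p v)) * c v by ring.
  rewrite mulrA; apply: ler_wpM2r => //.
lra.
Qed.

End Final.

Section Prob.
Variables (d : measure_display) (T : measurableType d) (R : realType)
  (P : probability T R) (V : finType) (l r : V -> R) (w : V -> T -> R).
Hypothesis Hmeas : forall v, measurable_fun setT (w v).

Definition spat t : {set V * V} := pat l r (realize w t).
Definition Sset (s : {set V * V}) : set T := [set t | spat t = s].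
Definition mu s := fine (P (Sset s)).

Lemma meas_inI z v : measurable [set t | inI l r (w z t) v].
Proof.
have := Hmeas z measurableT (measurable_itv `]l v, r v[); rewrite setTI.
suff -> : [set t | inI l r (w z t) v] = w z @^-1` [set` `]l v, r v[%R] by [].
by apply/seteqP; split => t /=; rewrite /inI in_itv.
Qed.

Lemma Sset_meas s : measurable (Sset s).
Proof.
have -> : Sset s = \bigcap_(pr in [set: V * V])
    [set t | (pr \in s) = inI l r (w pr.1 t) pr.2].
  apply/seteqP; split => t /=.
    by move=> <- pr _; rewrite /spat inE.
  move=> H; apply/setP => pr; rewrite /spat inE; symmetry; exact: H.
apply: fin_bigcap_measurable; first exact: finite_finset.
move=> [z v] _ /=; case: (boolP ((z, v) \in s)) => _.
  suff -> : [set t | true = inI l r (w z t) v] = [set t | inI l r (w z t) v].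
    exact: meas_inI.
  by apply/seteqP; split => t /= h.
suff -> : [set t | false = inI l r (w z t) v] = ~` [set t | inI l r (w z t) v].
  exact/measurableC/meas_inI.
apply/seteqP; split => t /=; first by move=> <-.
by move/negP/negbTE => ->.
Qed.

Lemma indic_Sset s t : \1_(Sset s) t = (spat t == s)%:R :> R.
Proof.
rewrite indicE; case: (eqVneq (spat t) s) => h.
  by rewrite mem_set.
by rewrite memNset //; exact/eqP.
Qed.

Lemma mu_ge0 s : 0 <= mu s.
Proof. exact/fine_ge0/measure_ge0. Qed.

Lemma int_pat (f : {set V * V} -> R) : (forall s, 0 <= f s) ->
  (\int[P]_t (f (spat t))%:E = (\sum_s f s * mu s)%:E)%E.
Proof.
move=> f0.
rewrite (eq_integral (fun t => \sum_s (f s)%:E * (\1_(Sset s) t)%:E)%E); last first.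
  move=> t _; rewrite sumEFin; congr (_%:E).
  rewrite (bigD1 (spat t)) //= indic_Sset eqxx mulr1 big1 ?addr0 // => s hs.
  by rewrite indic_Sset eq_sym (negbTE hs) mulr0.
rewrite ge0_integral_sum //; last first.
- by move=> s t _; apply: mule_ge0; rewrite lee_fin ?f0 // indicE ler0n.
- move=> s; apply: emeasurable_funM => //.
  by apply/measurable_EFinP; exact: measurable_indic (Sset_meas s).
rewrite -sumEFin; apply: eq_bigr => s _.
rewrite ge0_integralZl_EFin //.
- rewrite integral_indic // ?setIT ?EFinM /mu ?fineK //; last exact: Sset_meas.
  exact: (fin_num_measure P _ (Sset_meas s)).
all: try (by move=> t _; rewrite lee_fin indicE ler0n).
all: try (by apply/measurable_EFinP; exact: measurable_indic (Sset_meas s)).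
Qed.

Lemma meas_pat (g : {set V * V} -> bool) : measurable [set t | g (spat t)].
Proof.
have -> : [set t | g (spat t)] = \bigcup_(s in [set s | g s]) Sset s.
  apply/seteqP; split => t /=.
    by move=> h; exists (spat t).
  by move=> [s gs st]; rewrite /Sset /= in st; rewrite st.
apply: fin_bigcup_measurable; first exact: finite_finset.
by move=> s _; exact: Sset_meas.
Qed.

Lemma prob_pat (g : {set V * V} -> bool) :
  fine (P [set t | g (spat t)]) = \sum_s (g s)%:R * mu s.
Proof.
have h := @int_pat (fun s => (g s)%:R) (fun s => ler0n _ _).
rewrite -[X in fine (P X)]setIT -integral_indic //; last exact: meas_pat.
rewrite (eq_integral (fun t => ((g (spat t))%:R)%:E)); last first.
  move=> t _; rewrite indicE; case: (boolP (g (spat t))) => gt.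
    by rewrite mem_set.
  by rewrite memNset //= ; exact/negP.
by rewrite h.
Qed.

Lemma mu_sum1 : \sum_s mu s = 1.
Proof.
have := prob_pat (fun _ => true).
have -> : [set t | true] = [set: T] by apply/seteqP; split.
rewrite probability_setT /= => h.
by rewrite (eq_bigr (fun s => (true)%:R * mu s)) -?h // => s _; rewrite mul1r.
Qed.

Definition Bu (e : rel V) x z : set R :=
  if e z x then ~` [set` `]l x, r x[%R] else setT.

Lemma Bu_meas e x z : measurable (Bu e x z).
Proof. rewrite /Bu; case: ifP => _; first (apply: measurableC; exact: measurable_itv). exact: measurableT. Qed.

Lemma EU e x : [set t | ~~ mandC e (spat t) x] = \bigcap_(z in [set: V]) (w z @^-1` Bu e x z).
Proof.
apply/seteqP; split => t /=.
  move=> /existsPn h z _; rewrite /Bu; case: ifP => ez //=.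
  have := h z; rewrite ez /spat inE /= /inI => hz.
  by rewrite in_itv /=; apply/negP.
move=> H; apply/existsPn => z; apply/negP => /andP[ez].
rewrite /spat inE /= /inI => hz; have := H z I; rewrite /Bu ez /=; apply.
by rewrite in_itv.
Qed.

Lemma indep_edge (e : rel V) (A : {set V})
  (Hbip : forall u v, e u v -> (u \in A) != (v \in A))
  (Hindep : mutually_independent P w) u v : e u v ->
  \sum_s (~~ mandC e s u && ~~ mandC e s v)%:R * mu s =
  (\sum_s (~~ mandC e s u)%:R * mu s) * (\sum_s (~~ mandC e s v)%:R * mu s).
Proof.
move=> euv.
have EUV : [set t | ~~ mandC e (spat t) u && ~~ mandC e (spat t) v] =
    \bigcap_(z in [set: V]) (w z @^-1` (Bu e u z `&` Bu e v z)).
  have -> : [set t | ~~ mandC e (spat t) u && ~~ mandC e (spat t) v] =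
      [set t | ~~ mandC e (spat t) u] `&` [set t | ~~ mandC e (spat t) v].
    by apply/seteqP; split => t /=; [move/andP | move=> [-> ->]].
  rewrite !EU; apply/seteqP; split => t /=.
    by move=> [h1 h2] z _; split; [exact: h1 | exact: h2].
  by move=> h; split => z _; have [] := h z I.
rewrite -!prob_pat EUV !EU.
rewrite (Hindep (fun z => Bu e u z `&` Bu e v z)); last first.
  by move=> z; apply: measurableI; exact: Bu_meas.
rewrite (Hindep (Bu e u)); last exact: Bu_meas.
rewrite (Hindep (Bu e v)); last exact: Bu_meas.
rewrite -big_split /=; apply: eq_bigr => z _.
have tri : ~~ (e z u && e z v).
  apply/negP => /andP[zu zv].
  have := Hbip _ _ zu; have := Hbip _ _ zv; have := Hbip _ _ euv.
  by case: (z \in A); case: (u \in A); case: (v \in A).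
have P1 : fine (P (w z @^-1` [set: R])) = 1 by rewrite preimage_setT probability_setT.
rewrite /Bu; move: tri; case: (e z u); case: (e z v) => //= _.
- by rewrite setIT P1 mulr1.
- by rewrite setTI P1 mul1r.
- by rewrite setIT P1 mul1r.
Qed.

End Prob.

Unset Implicit Arguments.
Set Strict Implicit.

Lemma bool_le (R : realType) (a b : bool) : (a -> b) -> (a%:R <= b%:R :> R).
Proof. by case: a; case: b => // h; have := h isT. Qed.

Lemma bool4 (R : realType) (a b x y : bool) : a ==> x -> b ==> y ->
  (~~ a && ~~ b) ==> (x || y) ->
  (~~ a && ~~ b)%:R <= (x%:R - a%:R) + (y%:R - b%:R) :> R.
Proof.
by case: a; case: b; case: x; case: y => //= _ _ _; rewrite ?mulr0n ?mulr1n; lra.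
Qed.

Lemma feas_mand (V : finType) (e : rel V) s (Q : {set V}) v :
  feasC e s Q -> mandC e s v -> v \in Q.
Proof.
rewrite /feasC /mandC; move=> /forallP H; case/existsP => z /andP[ezv zv].
move: (H z) => /forallP/(_ v)/implyP/(_ ezv)/orP[/andP[_ /orP[//|]]|/andP[//]].
by rewrite zv.
Qed.

Lemma feas_cov (V : finType) (e : rel V) s (Q : {set V}) u v :
  feasC e s Q -> e u v -> (u \in Q) || (v \in Q).
Proof.
rewrite /feasC; move=> /forallP H euv.
by move: (H u) => /forallP/(_ v)/implyP/(_ euv)/orP[/andP[-> //]|/andP[-> _]]; rewrite orbT.
Qed.

Lemma feasT (V : finType) (e : rel V) s : feasC e s [set: V].
Proof. by rewrite /feasC; apply/forallP => u; apply/forallP => v; rewrite !inE /= implybT. Qed.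

Theorem theorem4p1 (d : measure_display) (T : measurableType d)
  (R : realType) (P : probability T R) (V : finType) (e : rel V)
  (c l r : V -> R) (w : V -> T -> R)
  (Hgraph : simple_graph e) (Hbip : bipartite e)
  (Hc : forall v, 0 <= c v)
  (Hmeas : forall v, measurable_fun setT (w v))
  (Hindep : mutually_independent P w)
  (Hcont : forall v, continuous_distr P (w v))
  (Hsupp : forall v, min_support_interval P (w v) (l v) (r v))
  (Hedges : forall u v, e u v -> overlapping l r u v)
  (VC : {set V}) (Hbest : best_vc P e c l r w VC) :
  (\int[P]_t (vc_alg_cost e c l r VC (realize w t))%:E <=
   (4 / 3 : R)%:E * \int[P]_t (opt_cost e c l r (realize w t))%:E)%E.
Proof.
have Hlr : forall v, l v < r v by move=> v; have [] := Hsupp v.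
have Hov : forall u v, e u v -> exists m, (l u < m < r u) /\ (l v < m < r v).
  move=> u v /Hedges [[m [h1 h2]] _]; exists m.
  by move: h1 h2; rewrite /= !in_itv /= => -> ->.
have [A HA] := Hbip.
pose sp := spat l r w.
pose Qs := fun s : {set V * V} => [arg min_(Q < [set: V]%SET | feasC e s Q) qcost c Q]%O.
have hQs : forall s, feasC e s (Qs s).
  move=> s; rewrite /Qs; case: (arg_minP (qcost c) (feasT _ e s)) => Q hQ _; exact: hQ.
have Eopt : forall t, opt_cost e c l r (realize w t) = qcost c (Qs (sp t)).
  move=> t; rewrite /opt_cost (eq_bigl (feasC e (sp t))); last first.
    move=> Q; apply/idP/idP.
      by move/asboolP/(feasibleE Hgraph Hlr Hov).
    by move/(feasibleE Hgraph Hlr Hov)/asboolP.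
  apply: bigmin_eq_arg; first exact: feasT.
  move=> Q _; rewrite /qcost [X in (_ <= X)%O]big_mkcond [X in (X <= _)%O]big_mkcond /=.
  by apply: ler_sum => v _; rewrite !inE; case: ifP.
pose Falg := fun s => \sum_(v in VC) c v + \sum_(v | (v \notin VC) && mandC e s v) c v.
have Ealg : forall t, vc_alg_cost e c l r VC (realize w t) = Falg (sp t).
  move=> t; rewrite /vc_alg_cost /Falg; congr (_ + _); apply: eq_bigl => v.
  congr (_ && _); apply/idP/idP.
    by move/asboolP/(mandatoryE Hgraph Hlr Hov).
  by move/(mandatoryE Hgraph Hlr Hov)/asboolP.
rewrite (eq_integral (fun t => (Falg (sp t))%:E)); last by move=> t _; rewrite Ealg.
rewrite [X in (_ <= _ * X)%E](eq_integral (fun t => (qcost c (Qs (sp t)))%:E)); last by move=> t _; rewrite Eopt.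
rewrite /sp (int_pat P l r Hmeas); last first.
  by move=> s; apply: addr_ge0; apply: sumr_ge0 => v _.
rewrite (int_pat P l r Hmeas (f := fun s => qcost c (Qs s))); last by move=> s; apply: sumr_ge0 => v _.
rewrite -EFinM lee_fin.
pose pv := fun v => \sum_s (mandC e s v)%:R * mu P l r w s.
pose qv := fun v => \sum_s (v \in Qs s)%:R * mu P l r w s.
have Pm : forall v, p_mand P e l r w v = pv v.
  move=> v; rewrite /p_mand.
  have -> : [set t | mandatory e l r v (realize w t)] = [set t | mandC e (sp t) v].
    by apply/seteqP; split => t /= /(mandatoryE Hgraph Hlr Hov).
  exact: prob_pat.
have mu0 := mu_ge0 P l r w.
have mu1 := mu_sum1 P l r Hmeas.
have hp0 : forall v, 0 <= pv v.
  by move=> v; apply: sumr_ge0 => s _; apply: mulr_ge0.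
have hpq : forall v, pv v <= qv v.
  move=> v; apply: ler_sum => s _; apply: ler_wpM2r => //.
  by apply: bool_le; exact: feas_mand.
have hq1 : forall v, qv v <= 1.
  move=> v; rewrite -mu1; apply: ler_sum => s _.
  by case: (v \in Qs s); rewrite ?mul1r ?mul0r.
have one_sub : forall g : {set V * V} -> bool,
    1 - \sum_s (g s)%:R * mu P l r w s = \sum_s (~~ g s)%:R * mu P l r w s.
  move=> g; rewrite -[X in X - _]mu1 -sumrB; apply: eq_bigr => s _.
  by case: (g s); rewrite ?mul1r ?mul0r ?subrr ?subr0.
have hedge : forall u v, e u v -> (1 - pv u) * (1 - pv v) <= (qv u - pv u) + (qv v - pv v).
  move=> u v euv; rewrite !one_sub -(indep_edge l r Hmeas HA Hindep euv).
  rewrite -!sumrB -big_split /=; apply: ler_sum => s _.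
  rewrite -!mulrBl -mulrDl; apply: ler_wpM2r => //.
  apply: bool4; apply/implyP.
  - exact: feas_mand.
  - exact: feas_mand.
  - by move=> _; apply: feas_cov.
have hmin : forall C, vertex_cover e C ->
    \sum_(v in VC) (1 - pv v) * c v <= \sum_(v in C) (1 - pv v) * c v.
  move=> C hC; have := Hbest.2 C hC.
  by rewrite (eq_bigr (fun v => (1 - pv v) * c v)) => [|v _]; rewrite ?Pm //;
    rewrite [X in _ <= X -> _](eq_bigr (fun v => (1 - pv v) * c v)) => [|v _]; rewrite ?Pm.
have H := final_alg HA hp0 hpq hq1 Hc hedge hmin.
have E1 : \sum_s Falg s * mu P l r w s =
    \sum_(v in VC) c v + \sum_(v | v \notin VC) pv v * c v.
  rewrite /Falg.
  rewrite (eq_bigr (fun s => (\sum_(v in VC) c v) * mu P l r w s +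
     (\sum_(v | v \notin VC) (mandC e s v)%:R * mu P l r w s * c v))); last first.
    move=> s _; rewrite mulrDl; congr (_ + _).
    rewrite big_mkcondr /= mulr_suml; apply: eq_bigr => v _.
    by case: (mandC e s v); rewrite /= ?mul1r ?mul0r // mulrC.
  rewrite big_split /= -mulr_sumr mu1 mulr1; congr (_ + _).
  rewrite exchange_big /=; apply: eq_bigr => v _.
  by rewrite /pv mulr_suml.
have E2 : \sum_s qcost c (Qs s) * mu P l r w s = \sum_v qv v * c v.
  rewrite (eq_bigr (fun s => \sum_v (v \in Qs s)%:R * mu P l r w s * c v)); last first.
    move=> s _; rewrite /qcost big_mkcond /= mulr_suml; apply: eq_bigr => v _.
    by case: (v \in Qs s); rewrite /= ?mul1r ?mul0r // mulrC.
  rewrite exchange_big /=; apply: eq_bigr => v _.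
  by rewrite /qv mulr_suml.
by rewrite E1 E2.
Qed.
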